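(* Let $n\ge1$ and let $\{\mathcal{I},\mathcal{J}\}=\{\mathcal{N},\mathcal{M}\}$. If $\mathrm{cov}_t(\mathcal{I})\ge\mathrm{cof}(\mathcal{I})$, then there exists a linear subspace $H$ of $\mathbb{R}^n$, considered as a vector space over $\mathbb{Q}$, such that $H\in\mathcal{J}\setminus\mathcal{I}$.
   Context: $\mathcal{N}$ is the $\sigma$-ideal of Lebesgue null subsets of $\mathbb{R}^n$, and $\mathcal{M}$ is the $\sigma$-ideal of meager subsets of $\mathbb{R}^n$. For $A,B\subseteq\mathbb{R}^n$ put $A+B=\{a+b:a\in A,b\in B\}$. $\mathrm{cof}(\mathcal{I})=\min\{|\mathcal{F}|:\mathcal{F}\subseteq\mathcal{I},\ \forall A\in\mathcal{I}\ \exists B\in\mathcal{F}\ A\subseteq B\}$. $\mathrm{cov}_t(\mathcal{I})=\min\{|A|:A\subseteq\mathbb{R}^n,\ \exists B\in\mathcal{I}\ (A+B=\mathbb{R}^n)\}$ (the transitive covering number). *)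

(* Defs.v *)
From Stdlib Require Import Reals QArith Qreals.
From Stdlib Require Vectors.Fin.
Open Scope R_scope.

Definition pt (n : nat) : Type := Fin.t n -> R.

Definition set_ (n : nat) : Type := pt n -> Prop.

Definition subset_ {n : nat} (A B : set_ n) : Prop := forall x, A x -> B x.

Definition cube {n : nat} (c : pt n) (s : R) : set_ n :=
  fun x => forall i, Rabs (x i - c i) <= s / 2.

Definition null_set (n : nat) (A : set_ n) : Prop :=
  forall eps, 0 < eps ->
    exists (c : nat -> pt n) (s : nat -> R),
      (forall k, 0 <= s k) /\
      (forall x, A x -> exists k, cube (c k) (s k) x) /\
      (forall N, sum_f_R0 (fun k => s k ^ n) N < eps).

(* Open ball (for the sup-norm, which induces the usual topology of R^n). *)
Definition ball {n : nat} (x : pt n) (r : R) : set_ n :=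
  fun y => forall i, Rabs (y i - x i) < r.

Definition nowhere_dense {n : nat} (A : set_ n) : Prop :=
  forall x r, 0 < r ->
    exists y r', 0 < r' /\ subset_ (ball y r') (ball x r) /\
                 (forall z, ball y r' z -> ~ A z).

Definition meager (n : nat) (A : set_ n) : Prop :=
  exists N : nat -> set_ n,
    (forall k, nowhere_dense (N k)) /\
    (forall x, A x -> exists k, N k x).

Definition sum_is_full {n : nat} (A B : set_ n) : Prop :=
  forall x : pt n, exists a b, A a /\ B b /\ forall i, x i = a i + b i.

(* cof(I) <= |T| : there is a T-indexed family of members of I cofinal in I. *)
Definition cof_le_card {n : nat} (I : set_ n -> Prop) (T : Type) : Prop :=
  exists f : T -> set_ n,
    (forall t, I (f t)) /\ (forall C, I C -> exists t, subset_ C (f t)).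

(* cov_t(I) >= cof(I): every A witnessing cov_t (A + B = R^n for some B in I)
   has cardinality at least cof(I). *)
Definition covt_ge_cof {n : nat} (I : set_ n -> Prop) : Prop :=
  forall A : set_ n, (exists B, I B /\ sum_is_full A B) ->
    cof_le_card I {x : pt n | A x}.

Definition Q_subspace {n : nat} (H : set_ n) : Prop :=
  H (fun _ => 0) /\
  (forall x y, H x -> H y -> H (fun i => x i + y i)) /\
  (forall (q : Q) x, H x -> H (fun i => Q2R q * x i)).

(* Main.v *)
Require Import Defs.
From Stdlib Require Import Reals QArith Qreals ZArith Cantor.
From Stdlib Require Import Lra Lia List Permutation ClassicalEpsilon FunctionalExtensionality ProofIrrelevance Classical.
From mathcomp Require ssreflect ssrfun ssrbool eqtype ssrnat seq choice boolp wochoice.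

Module WO.
Import ssreflect ssrbool eqtype boolp.
Lemma inP' (T : Type) (A : {classic T} -> Prop) x : x \in (fun y : {classic T} => `[< A y >]) <-> A x.
Proof. split. move=> H. exact: (asboolP _ H). move=> H. exact/asboolP. Qed.

Lemma wo_exists (T : Type) : exists lt : T -> T -> Prop,
  well_founded lt /\ (forall x y z, lt x y -> lt y z -> lt x z) /\
  (forall x y, x <> y -> lt x y \/ lt y x) /\ (forall x, ~ lt x x).
Proof.
destruct (wochoice.well_ordering_principle (boolp.classicType T)) as [R HR].
assert (Hmin : forall A : T -> Prop, (exists x, A x) -> exists z, A z /\ forall x, A x -> R z x = true).
{ intros A [x Ax].
  destruct (HR (fun y => `[< A y >])) as [z [[Hz1 Hz2] _]].
  { exists x. apply inP'. exact Ax. }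
  exists z. split.
  - exact: (asboolP _ Hz1).
  - intros y Ay. apply Hz2. apply inP'. exact Ay. }
assert (Hrefl : forall x, R x x = true).
{ intros x. destruct (Hmin (fun w => w = x)) as [z [-> Hz]]. eauto. auto. }
assert (Htot : forall x y, R x y = true \/ R y x = true).
{ intros x y. destruct (Hmin (fun w => w = x \/ w = y)) as [z [[->| ->] Hz]]. eauto.
  left; auto. right; auto. }
assert (Hanti : forall x y, R x y = true -> R y x = true -> x = y).
{ intros x y H1 H2.
  destruct (HR (fun w => `[< w = x \/ w = y >])) as [z [[Hz1 Hz2] Hu]].
  { exists x. apply inP'. auto. }
  assert (Ex : x = z).
  { symmetry. apply Hu. split. apply inP'; auto.
    intros w Hw. move: Hw => /asboolP [->| ->]. apply Hrefl. exact H1. }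
  assert (Ey : y = z).
  { symmetry. apply Hu. split. apply inP'; auto.
    intros w Hw. move: Hw => /asboolP [->| ->]. exact H2. apply Hrefl. }
  congruence. }
assert (Htrans : forall x y z, R x y = true -> R y z = true -> R x z = true).
{ intros x y z H1 H2.
  destruct (Hmin (fun w => w = x \/ w = y \/ w = z)) as [m [Hm Hmm]]. eauto.
  destruct Hm as [-> | [-> | ->]].
  - apply Hmm; auto.
  - assert (E : x = y) by (apply Hanti; auto; apply Hmm; auto). rewrite E; auto.
  - assert (E : y = z) by (apply Hanti; auto; apply Hmm; auto). rewrite -E; auto. }
exists (fun x y => R x y = true /\ x <> y).
split; [|split; [|split]].
- intros a. apply NNPP. intros Hna.
  destruct (Hmin (fun w => ~ Acc (fun x y => R x y = true /\ x <> y) w)) as [m [Hm Hmm]]. eauto.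
  apply Hm. constructor. intros y [Hy1 Hy2]. apply NNPP. intros Hy.
  apply Hy2. apply Hanti; auto.
- intros x y z [H1 H2] [H3 H4]. split. eauto. intros ->. apply H2. apply Hanti; auto.
- intros x y Hxy. destruct (Htot x y); [left|right]; split; auto.
- intros x [_ H]. auto.
Qed.
End WO.

Module Cnt.
Import ssreflect ssrfun ssrbool eqtype ssrnat seq choice.
Lemma surj_code : exists g : nat -> list (bool * nat * nat * nat)%type, forall l, exists k, g k = l.
Proof.
exists (fun k => odflt [::] (unpickle k)). move=> l. exists (pickle l). by rewrite pickleK.
Qed.
Lemma surj_pair : exists g : nat -> (nat * nat)%type, forall l, exists k, g k = l.
Proof.
exists (fun k => odflt (0%nat,0%nat) (unpickle k)). move=> l. exists (pickle l). by rewrite pickleK.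
Qed.
End Cnt.

Open Scope R_scope.

Definition qcode (c : bool * nat * nat) : Q :=
  let '(s, a, b) := c in Qmake (if s then (- Z.of_nat a)%Z else Z.of_nat a) (Pos.of_succ_nat b).

Lemma qcode_surj : forall q : Q, exists c, qcode c = q.
Proof.
intros [z p]. destruct (Z.neg_nonneg_cases z) as [Hz|Hz].
- exists (true, Z.to_nat (- z), pred (Pos.to_nat p)). simpl.
  f_equal. rewrite Z2Nat.id by lia. lia.
  apply Pos2Nat.inj. rewrite SuccNat2Pos.id_succ. pose proof (Pos2Nat.is_pos p). lia.
- exists (false, Z.to_nat z, pred (Pos.to_nat p)). simpl.
  f_equal. rewrite Z2Nat.id by lia. lia.
  apply Pos2Nat.inj. rewrite SuccNat2Pos.id_succ. pose proof (Pos2Nat.is_pos p). lia.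
Qed.

Lemma surj_Q : exists g : nat -> Q, forall q, exists k, g k = q.
Proof.
destruct Cnt.surj_code as [g Hg].
exists (fun k => match g k with (s, a, b, _) :: _ => qcode (s, a, b) | nil => 0%Q end).
intros q. destruct (qcode_surj q) as [[[s a] b] Hc].
destruct (Hg ((s, a, b, 0%nat) :: nil)) as [k Hk]. exists k. rewrite Hk. exact Hc.
Qed.
Open Scope R_scope.

Section Ideal.
Variable n : nat.
Variable I : set_ n -> Prop.
Hypothesis I_sub : forall A B : set_ n, subset_ A B -> I B -> I A.
Hypothesis I_cunion : forall A : nat -> set_ n, (forall k, I (A k)) -> I (fun x => exists k, A k x).
Hypothesis I_full : ~ I (fun _ => True).
Hypothesis I_single : forall p, I (fun x => x = p).

Definition smallS {U : Type} (A : U -> Prop) := ~ cof_le_card I {x | A x}.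

Lemma small_surj {U W : Type} (A : U -> Prop) (B : W -> Prop) (f : U -> W) :
  (forall w, B w -> exists u, A u /\ f u = w) -> smallS A -> smallS B.
Proof.
intros Hs HA [g [Hg1 Hg2]]. apply HA.
exists (fun u => fun x => exists h : B (f (proj1_sig u)), g (exist _ (f (proj1_sig u)) h) x).
split.
- intros [u Au]. simpl. destruct (classic (B (f u))) as [Hb|Hb].
  + apply (I_sub _ (g (exist _ (f u) Hb))); [|apply Hg1].
    intros x [h Hx]. rewrite (proof_irrelevance _ h Hb) in Hx. exact Hx.
  + apply (I_sub _ (fun x => x = x /\ False)).
    intros x [h _]. contradiction.
    apply (I_sub _ (fun x => x = (fun _ => 0))). intros x [_ []]. apply I_single.
- intros C HC. destruct (Hg2 C HC) as [[w Bw] Hw].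
  destruct (Hs w Bw) as [u [Au Hu]]. exists (exist _ u Au). simpl.
  intros x Cx. subst w. exists Bw. apply Hw. exact Cx.
Qed.

Lemma small_nat : smallS (fun _ : nat => True).
Proof.
intros [g [Hg1 Hg2]].
set (U := fun x => exists k, g (exist _ k Logic.I) x).
assert (IU : I U) by (apply I_cunion; intros k; apply Hg1).
assert (Hp : exists p, ~ U p).
{ apply NNPP. intros Hn. apply I_full. apply (I_sub _ U); [|exact IU].
  intros x _. apply NNPP. intros Hx. apply Hn. exists x. exact Hx. }
destruct Hp as [p Hp].
destruct (Hg2 _ (I_single p)) as [[k t] Hk].
apply Hp. exists k. destruct t. apply Hk. reflexivity.
Qed.

Definition LE (X : Type) := list (Q * (nat + X)).
Definition leaves {X : Type} (l : LE X) : list X :=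
  flat_map (fun p => match snd p with inl _ => nil | inr v => v :: nil end) l.
Definition LS {X : Type} (P : X -> Prop) (l : LE X) := forall v, In v (leaves l) -> P v.

Lemma LS_cons {X} (P : X -> Prop) q a l : LS P ((q, a) :: l) <->
  ((match a with inl _ => True | inr v => P v end) /\ LS P l).
Proof.
unfold LS; simpl. split.
- intros H. split. destruct a; auto. apply H; simpl; auto.
  intros v Hv. apply H. destruct a; simpl; auto.
- intros [H1 H2] v Hv. destruct a; simpl in Hv; auto. destruct Hv as [<-|Hv]; auto.
Qed.

Lemma LS_app {X} (P : X -> Prop) l1 l2 : LS P (l1 ++ l2) <-> LS P l1 /\ LS P l2.
Proof.
unfold LS, leaves. rewrite flat_map_app. split.
- intros H; split; intros v Hv; apply H; apply in_or_app; auto.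
- intros [H1 H2] v Hv. apply in_app_or in Hv. destruct Hv; auto.
Qed.

Lemma LS_nil {X} (P : X -> Prop) : LS P nil.
Proof. intros v []. Qed.

Section Code.
Variable X : Type.
Definition enc_inner (p : Q * (nat + X)) : Q * (nat + X) :=
  match p with (q, inl k) => (q, inl (S (S k))) | (q, inr x) => (q, inr x) end.
Definition dec_inner (p : Q * (nat + X)) : Q * (nat + X) :=
  match p with (q, inl (S (S k))) => (q, inl k) | (q, inl _) => (q, inl 0%nat) | (q, inr x) => (q, inr x) end.
Definition dec_outer (p : Q * (nat + X)) : Q * (nat + LE X) :=
  match p with (q, inl (S (S k))) => (q, inl k) | (q, inl _) => (q, inl 0%nat)
             | (q, inr x) => (q, inr ((q, inr x) :: nil)) end.
Definition enc_item (p : Q * (nat + LE X)) : LE X :=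
  match p with
  | (q, inl k) => (0%Q, inl 1%nat) :: (q, inl (S (S k))) :: nil
  | (q, inr l) => (q, inl 0%nat) :: map enc_inner l
  end.
Definition enc (y : LE (LE X)) : LE X := flat_map enc_item y.
Definition dstep (it : Q * (nat + X)) (s : LE (LE X) * LE X) : LE (LE X) * LE X :=
  let (o, c) := s in
  match it with
  | (q, inl 0%nat) => ((q, inr (map dec_inner c)) :: o, nil)
  | (q, inl 1%nat) => (map dec_outer c ++ o, nil)
  | _ => (o, it :: c)
  end.
Definition dec (l : LE X) : LE (LE X) :=
  let (o, c) := fold_right dstep (nil, nil) l in map dec_outer c ++ o.

Lemma fold_inner : forall l o c,
  fold_right dstep (o, c) (map enc_inner l) = (o, map enc_inner l ++ c).
Proof.
induction l as [|[q [k|x]] l IH]; intros o c; simpl; auto; rewrite IH; reflexivity.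
Qed.

Lemma dec_enc_inner : forall l, map dec_inner (map enc_inner l) = l.
Proof. induction l as [|[q [k|x]] l IH]; simpl; auto; rewrite IH; auto. Qed.

Lemma fold_enc : forall y o, fold_right dstep (o, nil) (enc y) = (y ++ o, nil).
Proof.
induction y as [|[q [k|l]] y IH]; intros o; simpl; auto.
- unfold enc in IH. rewrite IH. reflexivity.
- unfold enc in IH. rewrite fold_right_app, IH. simpl. rewrite fold_inner.
  simpl. rewrite app_nil_r, dec_enc_inner. reflexivity.
Qed.

Lemma dec_enc : forall y, dec (enc y) = y.
Proof. intros y. unfold dec. rewrite fold_enc. simpl. apply app_nil_r. Qed.

Lemma LS_enc (P : X -> Prop) : forall y, LS (LS P) y -> LS P (enc y).
Proof.
induction y as [|[q [k|l]] y IH]; intros H; unfold enc; simpl.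
- apply LS_nil.
- apply LS_cons in H. destruct H as [_ H].
  apply LS_cons. split; [exact Logic.I|]. apply LS_cons. split; [exact Logic.I|].
  change (LS P (enc y)). apply IH, H.
- apply LS_cons in H. destruct H as [H1 H]. apply LS_cons. split; [exact Logic.I|].
  apply LS_app. split; [|change (LS P (enc y)); apply IH, H].
  clear -H1. induction l as [|[q' [k|x]] l IH]; simpl.
  + apply LS_nil.
  + apply LS_cons in H1. apply LS_cons. split; auto. apply IH. apply H1.
  + apply LS_cons in H1. destruct H1 as [H1a H1b]. apply LS_cons. split; [exact H1a|]. apply IH. exact H1b.
Qed.
End Code.

Lemma small_LLS {X : Type} (P : X -> Prop) : smallS (LS P) -> smallS (LS (LS P)).
Proof.
apply small_surj with (f := dec X). intros y Hy. exists (enc X y). split.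
apply LS_enc, Hy. apply dec_enc.
Qed.

Lemma small_pad {X : Type} (P : X -> Prop) (b : X) :
  smallS (LS P) -> smallS (LS (fun v => P v \/ v = b)).
Proof.
set (pad := fun p : Q * (nat + X) => match p with
  | (q, inl 0%nat) => (q, inr b) | (q, inl (S k)) => (q, inl k) | (q, inr v) => (q, inr v) end).
set (unpad := fun p : Q * (nat + X) => match p with
  | (q, inl k) => (q, inl (S k))
  | (q, inr v) => if excluded_middle_informative (v = b) then (q, inl 0%nat) else (q, inr v) end).
apply small_surj with (f := map pad). intros y Hy. exists (map unpad y). split.
- induction y as [|[q [k|v]] y IH]; simpl.
  + apply LS_nil.
  + apply LS_cons in Hy. apply LS_cons. split; auto. apply IH, Hy.
  + apply LS_cons in Hy. destruct Hy as [Hv Hy].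
    destruct (excluded_middle_informative (v = b)); apply LS_cons; split; auto.
    destruct Hv; [auto|contradiction].
- induction y as [|[q [k|v]] y IH]; simpl; auto.
  + apply LS_cons in Hy. rewrite IH by apply Hy. reflexivity.
  + apply LS_cons in Hy.
    destruct (excluded_middle_informative (v = b)); simpl; rewrite IH by apply Hy;
    [subst; reflexivity | reflexivity].
Qed.

Lemma small_LS0 {X : Type} : smallS (LS (fun _ : X => False)).
Proof.
destruct Cnt.surj_code as [g Hg].
apply small_surj with (A := fun _ : nat => True)
  (f := fun k => map (fun c : bool * nat * nat * nat => let '(s, a, b, j) := c in
                      (qcode (s, a, b), @inl nat X j)) (g k)).
2: apply small_nat.
intros y Hy.
assert (Hc : exists cl, map (fun c : bool * nat * nat * nat => let '(s, a, b, j) := c in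
                      (qcode (s, a, b), @inl nat X j)) cl = y).
{ clear Hg. induction y as [|[q [k|v]] y IH].
  - exists nil; reflexivity.
  - apply LS_cons in Hy. destruct IH as [cl Hcl]. apply Hy.
    destruct (qcode_surj q) as [[[s a] b] Hq].
    exists ((s, a, b, k) :: cl). subst q y. reflexivity.
  - apply LS_cons in Hy. destruct Hy as [[] _]. }
destruct Hc as [cl Hcl]. destruct (Hg cl) as [k Hk]. exists k. split; auto.
rewrite Hk. exact Hcl.
Qed.


Hypothesis I_scale : forall (r : R) (A : set_ n), r <> 0 -> I A -> I (fun y => A (fun i => r * y i)).
Variable J : set_ n -> Prop.
Hypothesis J_sub : forall A B : set_ n, subset_ A B -> J B -> J A.
Hypothesis J_union2 : forall A B : set_ n, J A -> J B -> J (fun x => A x \/ B x).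
Hypothesis J_single : forall p, J (fun x => x = p).
Variable Z : set_ n.
Hypothesis JZ : J Z.
Hypothesis IZc : I (fun x => ~ Z x).
Hypothesis Hcov : covt_ge_cof I.

Lemma Q2R0 : Q2R 0 = 0.
Proof. unfold Q2R; simpl; field. Qed.
Lemma Q2R1 : Q2R 1 = 1.
Proof. unfold Q2R; simpl; field. Qed.
Lemma Q2R_nz : forall q, ~ (q == 0)%Q -> Q2R q <> 0.
Proof. intros q Hq H. apply Hq. apply eqR_Qeq. rewrite H, Q2R0. reflexivity. Qed.

Section Constr.
Variable V : Type.
Variable lt : V -> V -> Prop.
Hypothesis lt_wf : well_founded lt.
Hypothesis lt_trans : forall x y z, lt x y -> lt y z -> lt x z.
Hypothesis lt_total : forall x y, x <> y -> lt x y \/ lt y x.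
Hypothesis lt_irr : forall x, ~ lt x x.
Variable lt2 : LE V -> LE V -> Prop.
Hypothesis lt2_wf : well_founded lt2.
Hypothesis lt2_trans : forall x y z, lt2 x y -> lt2 y z -> lt2 x z.
Hypothesis lt2_total : forall x y, x <> y -> lt2 x y \/ lt2 y x.
Hypothesis lt2_irr : forall x, ~ lt2 x x.
Variable P : V -> Prop.
Hypothesis P_down : forall a b, lt a b -> P b -> P a.
Hypothesis P_big : ~ smallS (LS P).
Hypothesis P_seg : forall b, P b -> smallS (LS (fun v => lt v b)).
Variable fam : LE V -> set_ n.
Hypothesis fam_I : forall t, LS P t -> I (fam t).
Hypothesis fam_cof : forall C, I C -> exists t, LS P t /\ subset_ C (fam t).

Lemma P_limit : forall m, P m -> exists g, P g /\ lt m g.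
Proof.
intros m Pm. apply NNPP. intros H. apply P_big.
apply small_surj with (A := LS (fun v => lt v m \/ v = m)) (f := fun w => w).
- intros w Hw. exists w. split; auto. intros v Hv. specialize (Hw v Hv).
  destruct (classic (v = m)) as [E|E]; auto.
  destruct (lt_total v m E) as [L|L]; auto. exfalso. apply H. exists v. auto.
- apply small_pad. apply P_seg, Pm.
Qed.

Lemma P_ne : exists b, P b.
Proof.
apply NNPP. intros H. apply P_big.
apply small_surj with (A := LS (fun _ : V => False)) (f := fun w => w).
- intros w Hw. exists w. split; auto. intros v Hv. apply H. exists v. apply Hw, Hv.
- apply small_LS0.
Qed.

Definition maxo (a : option V) (v : V) : option V :=
  match a with None => Some v
  | Some w => if excluded_middle_informative (lt w v) then Some v else Some w end.
Definition rankl (l : list V) : option V := fold_right (fun v a => maxo a v) None l.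
Definition rank (t : LE V) := rankl (leaves t).

Lemma rankl_spec : forall l, (rankl l = None /\ l = nil) \/
  (exists m, rankl l = Some m /\ In m l /\ forall v, In v l -> v = m \/ lt v m).
Proof.
induction l as [|a l IH]; simpl; auto.
right. destruct IH as [[E ->]|[m [E [Hm Hall]]]]; rewrite E; simpl.
- exists a. split; auto. split; auto. intros v [<-|[]]; auto.
- destruct (excluded_middle_informative (lt m a)) as [L|L].
  + exists a. split; auto. split; auto. intros v [<-|Hv]; auto.
    destruct (Hall v Hv) as [->|Hv']; eauto.
  + exists m. split; auto. split; auto. intros v [E0|Hv]; [subst a|auto].
    destruct (classic (v = m)) as [E'|E']; auto.
    destruct (lt_total _ _ E'); auto. contradiction.
Qed.

Definition rle (a b : option V) := match a, b with None, _ => True | Some _, None => False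
  | Some x, Some y => x = y \/ lt x y end.
Definition rlt (a b : option V) := match a, b with None, Some _ => True
  | Some x, Some y => lt x y | _, _ => False end.

Lemma rlt_wf : well_founded rlt.
Proof.
assert (H0 : Acc rlt None) by (constructor; intros [y|] H; destruct H).
intros [v|]; auto. induction v as [v IH] using (well_founded_induction lt_wf).
constructor. intros [w|] H; [apply IH; exact H|exact H0].
Qed.

Definition prec (u t : LE V) := rlt (rank u) (rank t) \/ (rank u = rank t /\ lt2 u t).

Lemma prec_wf : well_founded prec.
Proof.
intros t. remember (rank t) as r eqn:Er. revert t Er.
induction r as [r IHr] using (well_founded_induction rlt_wf).
intros t Er. induction t as [t IHt] using (well_founded_induction lt2_wf).
constructor. intros u [Hu|[Hu1 Hu2]].
- apply (IHr (rank u)); auto. rewrite Er; exact Hu.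
- apply IHt; auto. rewrite Hu1; auto.
Qed.

Lemma rlt_trans : forall a b c, rlt a b -> rlt b c -> rlt a c.
Proof. intros [a|] [b|] [c|]; simpl; eauto; tauto. Qed.

Lemma prec_trans : forall x y z, prec x y -> prec y z -> prec x z.
Proof.
intros x y z [H1|[H1 H1']] [H2|[H2 H2']].
- left; eapply rlt_trans; eauto.
- left; rewrite <- H2; auto.
- left; rewrite H1; auto.
- right; split; [congruence|eauto].
Qed.

Lemma prec_irr : forall x, ~ prec x x.
Proof.
intros x [H|[_ H]]. destruct (rank x) as [a|]; simpl in H; [exact (lt_irr a H)|exact H].
exact (lt2_irr x H).
Qed.

Lemma prec_total : forall x y, x <> y -> prec x y \/ prec y x.
Proof.
intros x y Hxy. unfold prec.
destruct (rank x) as [a|] eqn:Ea; destruct (rank y) as [b|] eqn:Eb; simpl.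
- destruct (classic (a = b)) as [->|E].
  + destruct (lt2_total x y Hxy); auto.
  + destruct (lt_total a b E); auto.
- auto.
- auto.
- destruct (lt2_total x y Hxy); auto.
Qed.

Lemma prec_rle : forall u t, prec u t -> rle (rank u) (rank t).
Proof.
intros u t [H|[H _]].
- destruct (rank u), (rank t); simpl in *; auto.
- rewrite H. destruct (rank t); simpl; auto.
Qed.

Lemma list_max : forall l : list (LE V), l <> nil ->
  exists m, In m l /\ forall y, In y l -> y = m \/ prec y m.
Proof.
induction l as [|a l IH]; intros Hl; [congruence|].
destruct l as [|b l'].
- exists a. split; simpl; auto. intros y [<-|[]]; auto.
- destruct IH as [m [Hm Hall]]; [congruence|].
  destruct (classic (a = m)) as [E|E].
  + exists m. split; [simpl; auto|]. intros y [<-|Hy]; auto.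
  + destruct (prec_total a m E) as [L|L].
    * exists m. split; [simpl; auto|]. intros y [<-|Hy]; auto.
    * exists a. split; [simpl; auto|]. intros y [<-|Hy]; auto.
      destruct (Hall y Hy) as [->|L']; auto. right; eapply prec_trans; eauto.
Qed.

Lemma gamma_exists : forall t, LS P t ->
  exists g, P g /\ forall u, prec u t -> LS (fun v => lt v g) u.
Proof.
intros t Ht. destruct (rankl_spec (leaves t)) as [[E Hn]|[m [E [Hm _]]]].
- destruct P_ne as [b Pb]. exists b. split; auto. intros u Hu.
  apply prec_rle in Hu. unfold rank at 2 in Hu. rewrite E in Hu.
  unfold rank in Hu. destruct (rankl_spec (leaves u)) as [[E' Hn']|[m' [E' _]]].
  + intros v Hv. rewrite Hn' in Hv. destruct Hv.
  + rewrite E' in Hu. destruct Hu.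
- destruct (P_limit m (Ht m Hm)) as [g [Pg Lg]]. exists g. split; auto.
  intros u Hu. apply prec_rle in Hu. unfold rank at 2 in Hu. rewrite E in Hu.
  unfold rank in Hu. intros v Hv.
  destruct (rankl_spec (leaves u)) as [[E' Hn']|[m' [E' [_ Hall]]]].
  + rewrite Hn' in Hv. destruct Hv.
  + rewrite E' in Hu. simpl in Hu.
    destruct (Hall v Hv) as [->|L]; destruct Hu as [->|L']; eauto.
Qed.

Definition combo (x : LE V -> pt n) (l : list (Q * LE V)) : pt n :=
  fun i => fold_right (fun p acc => Q2R (fst p) * x (snd p) i + acc) 0 l.

Lemma combo_app : forall x l1 l2 i, combo x (l1 ++ l2) i = combo x l1 i + combo x l2 i.
Proof.
intros x l1 l2 i. induction l1 as [|p l1 IH]; unfold combo in *; simpl. ring.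
rewrite IH. ring.
Qed.

Lemma combo_scale : forall x c l i,
  combo x (map (fun p => (c * fst p, snd p)%Q) l) i = Q2R c * combo x l i.
Proof.
intros x c l i. induction l as [|p l IH]; unfold combo in *; simpl. ring.
rewrite IH, Q2R_mult. ring.
Qed.

Lemma combo_ext : forall x1 x2 l, (forall p, In p l -> x1 (snd p) = x2 (snd p)) ->
  combo x1 l = combo x2 l.
Proof.
intros x1 x2 l H. extensionality i. induction l as [|p l IH]; unfold combo in *; simpl; auto.
rewrite IH by (intros; apply H; simpl; auto). rewrite H by (simpl; auto). reflexivity.
Qed.

Definition admis (t : LE V) (l : list (Q * LE V)) :=
  forall p, In p l -> prec (snd p) t /\ LS P (snd p).

Definition Hs (x : LE V -> pt n) (t : LE V) : set_ n :=
  fun v => exists l, admis t l /\ v = combo x l.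

Definition good (x : LE V -> pt n) (t : LE V) (y : pt n) :=
  ~ fam t y /\ forall l q, admis t l -> ~ (q == 0)%Q ->
     Z (fun i => combo x l i + Q2R q * y i).

Definition sel (t : LE V) (e : LE (LE V)) : list (Q * LE V) :=
  flat_map (fun p => match snd p with inl _ => nil
    | inr u => if excluded_middle_informative (prec u t /\ LS P u) then (fst p, u) :: nil else nil end) e.

Lemma Hs_small : forall x t, LS P t -> smallS (Hs x t).
Proof.
intros x t Ht. destruct (gamma_exists t Ht) as [g [Pg Hg]].
apply small_surj with (A := LS (LS (fun v => lt v g))) (f := fun e => combo x (sel t e)).
2: apply small_LLS, P_seg, Pg.
intros w [l [Hl ->]]. exists (map (fun p => (fst p, inr (snd p))) l). split.
- induction l as [|[q u] l IH]; simpl. apply LS_nil.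
  apply LS_cons. split.
  + apply Hg. apply (Hl (q, u)). simpl; auto.
  + apply IH. intros p Hp. apply Hl. simpl; auto.
- f_equal. induction l as [|[q u] l IH]; simpl; auto.
  destruct (excluded_middle_informative (prec u t /\ LS P u)) as [_|C].
  + simpl. rewrite IH; auto. intros p Hp. apply Hl. simpl; auto.
  + exfalso. apply C. apply (Hl (q, u)). simpl; auto.
Qed.

Lemma good_exists : forall x t, LS P t -> exists y, good x t y.
Proof.
intros x t Ht.
destruct surj_Q as [gq Hgq].
set (M := fun y : pt n => (exists q, ~ (q == 0)%Q /\ ~ Z (fun i => Q2R q * y i)) \/ fam t y).
assert (IM : I M).
{ apply (I_sub _ (fun y => exists k, match k with O => fam t y
     | S k' => ~ (gq k' == 0)%Q /\ ~ Z (fun i => Q2R (gq k') * y i) end)).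
  - intros y [[q [Hq HZ]]|Hf].
    + destruct (Hgq q) as [k Hk]. exists (S k). rewrite Hk. auto.
    + exists O. exact Hf.
  - apply I_cunion. intros [|k].
    + apply fam_I, Ht.
    + destruct (classic (gq k == 0)%Q) as [E|E].
      * apply (I_sub _ (fun y => y = (fun _ => 0) /\ False)).
        intros y [C _]. contradiction.
        apply (I_sub _ (fun y => y = (fun _ => 0))). intros y [_ []]. apply I_single.
      * apply (I_sub _ (fun y => (fun z => ~ Z z) (fun i => Q2R (gq k) * y i))).
        intros y [_ H]. exact H.
        apply (I_scale (Q2R (gq k)) (fun z => ~ Z z)). apply Q2R_nz, E. exact IZc. }
destruct (classic (sum_is_full (Hs x t) M)) as [Hf|Hf].
{ exfalso. apply (Hs_small x t Ht). apply Hcov. exists M. split; auto. }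
apply not_all_ex_not in Hf. destruct Hf as [y Hy]. exists y. split.
- intros Hfy. apply Hy. exists (fun _ => 0), y. split; [|split].
  + exists nil. split. intros p []. reflexivity.
  + right; exact Hfy.
  + intros i. ring.
- intros l q Hl Hq. apply NNPP. intros HZ. apply Hy.
  exists (combo x (map (fun p => ((- / q) * fst p, snd p)%Q) l)),
         (fun i => / Q2R q * (combo x l i + Q2R q * y i)).
  pose proof (Q2R_nz q Hq) as Hq'.
  split; [|split].
  + exists (map (fun p => ((- / q) * fst p, snd p)%Q) l). split; auto.
    intros p Hp. apply in_map_iff in Hp. destruct Hp as [p0 [<- Hp0]]. exact (Hl p0 Hp0).
  + left. exists q. split; auto. intros HZ'. apply HZ.
    replace (fun i => combo x l i + Q2R q * y i) with
      (fun i => Q2R q * (/ Q2R q * (combo x l i + Q2R q * y i))); auto.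
    extensionality i. field. exact Hq'.
  + intros i. rewrite combo_scale, Q2R_opp, Q2R_inv by exact Hq. field. exact Hq'.
Qed.

Definition step (t : LE V) (rec : forall u, prec u t -> pt n) : pt n :=
  epsilon (inhabits (fun _ : Fin.t n => 0))
    (good (fun u => match excluded_middle_informative (prec u t) with
                    | left h => rec u h | right _ => fun _ => 0 end) t).

Definition xs : LE V -> pt n := Fix prec_wf (fun _ => pt n) step.

Lemma xs_eq : forall t, xs t = step t (fun u _ => xs u).
Proof.
intros t. unfold xs. apply (Fix_eq prec_wf (fun _ => pt n) step).
intros t0 f g H. unfold step. f_equal. f_equal.
extensionality u. destruct (excluded_middle_informative (prec u t0)); auto.
Qed.

Lemma xs_good : forall t, LS P t -> good xs t (xs t).
Proof.
intros t Ht. rewrite xs_eq. unfold step.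
set (x' := fun u => match excluded_middle_informative (prec u t) with
                    | left _ => xs u | right _ => fun _ : Fin.t n => 0 end).
assert (G : good x' t (epsilon (inhabits (fun _ : Fin.t n => 0)) (good x' t))).
{ apply epsilon_spec. apply good_exists, Ht. }
destruct G as [G1 G2]. split; auto.
intros l q Hl Hq. specialize (G2 l q Hl Hq).
rewrite (combo_ext xs x' l); auto.
intros p Hp. unfold x'. destruct (excluded_middle_informative (prec (snd p) t)); auto.
exfalso. apply n0. apply Hl, Hp.
Qed.

Definition sumc (m : LE V) (l : list (Q * LE V)) : Q :=
  fold_right (fun p acc => if excluded_middle_informative (snd p = m) then (fst p + acc)%Q else acc) 0%Q l.
Definition filt (m : LE V) (l : list (Q * LE V)) : list (Q * LE V) :=
  fold_right (fun p acc => if excluded_middle_informative (snd p = m) then acc else p :: acc) nil l.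

Lemma combo_split : forall m l i,
  combo xs l i = Q2R (sumc m l) * xs m i + combo xs (filt m l) i.
Proof.
intros m l i. induction l as [|p l IH]; unfold combo in *; simpl.
- rewrite Q2R0. ring.
- destruct (excluded_middle_informative (snd p = m)) as [E|E]; simpl.
  + rewrite IH, Q2R_plus, E. ring.
  + rewrite IH. ring.
Qed.

Lemma filt_len : forall m l, In m (map snd l) -> (length (filt m l) < length l)%nat.
Proof.
intros m l. induction l as [|p l IH]; simpl; [intros []|].
intros H. destruct (excluded_middle_informative (snd p = m)) as [E|E]; simpl.
- assert (length (filt m l) <= length l)%nat; [|lia].
  clear. induction l as [|q l IH]; simpl; auto.
  destruct (excluded_middle_informative (snd q = m)); simpl; lia.
- destruct H as [H|H]; [contradiction|]. specialize (IH H). lia.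
Qed.

Lemma filt_in : forall m l p, In p (filt m l) -> In p l /\ snd p <> m.
Proof.
intros m l p. induction l as [|q l IH]; simpl; [intros []|].
destruct (excluded_middle_informative (snd q = m)) as [E|E]; simpl.
- intros H; destruct (IH H); auto.
- intros [<-|H]; auto. destruct (IH H); auto.
Qed.

Lemma combo_Z : forall k l, (length l <= k)%nat -> (forall p, In p l -> LS P (snd p)) ->
  (forall i, combo xs l i = 0) \/ Z (combo xs l).
Proof.
induction k as [|k IH]; intros l Hlen Hl.
{ destruct l; simpl in Hlen; [|lia]. left. intros i. reflexivity. }
destruct l as [|p0 l0] eqn:El.
{ left. intros i. reflexivity. }
rewrite <- El in *.
destruct (list_max (map snd l)) as [m [Hm Hmax]].
{ rewrite El. simpl. congruence. }
assert (Pm : LS P m).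
{ apply in_map_iff in Hm. destruct Hm as [p [<- Hp]]. apply Hl, Hp. }
assert (Hf : admis m (filt m l)).
{ intros p Hp. apply filt_in in Hp. destruct Hp as [Hp Hne]. split.
  - destruct (Hmax (snd p)) as [E|E]; auto. apply in_map, Hp. contradiction.
  - apply Hl, Hp. }
destruct (classic (sumc m l == 0)%Q) as [E|E].
- assert (Hc : forall i, combo xs l i = combo xs (filt m l) i).
  { intros i. rewrite (combo_split m). rewrite (Qeq_eqR _ _ E), Q2R0. ring. }
  destruct (IH (filt m l)) as [H|H].
  + pose proof (filt_len m l Hm). lia.
  + intros p Hp. apply Hf, Hp.
  + left. intros i. rewrite Hc. apply H.
  + right. replace (combo xs l) with (combo xs (filt m l)); auto.
    extensionality i. rewrite Hc. reflexivity.
- right. destruct (xs_good m Pm) as [_ G]. specialize (G (filt m l) (sumc m l) Hf E).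
  replace (combo xs l) with (fun i => combo xs (filt m l) i + Q2R (sumc m l) * xs m i); auto.
  extensionality i. rewrite (combo_split m l i). ring.
Qed.

Theorem constr_main : exists H : set_ n, Q_subspace H /\ J H /\ ~ I H.
Proof.
exists (fun v => exists l, (forall p, In p l -> LS P (snd p)) /\ v = combo xs l).
split; [|split].
- split; [|split].
  + exists nil. split. intros p []. reflexivity.
  + intros x y [l1 [H1 ->]] [l2 [H2 ->]]. exists (l1 ++ l2). split.
    * intros p Hp. apply in_app_or in Hp. destruct Hp; auto.
    * extensionality i. rewrite combo_app. reflexivity.
  + intros q x [l [H1 ->]]. exists (map (fun p => (q * fst p, snd p)%Q) l). split.
    * intros p Hp. apply in_map_iff in Hp. destruct Hp as [p0 [<- Hp0]]. exact (H1 p0 Hp0).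
    * extensionality i. rewrite combo_scale. reflexivity.
- apply (J_sub _ (fun x => Z x \/ x = (fun _ => 0))).
  + intros v [l [Hl ->]]. destruct (combo_Z (length l) l (le_n _) Hl) as [H|H]; auto.
    right. extensionality i. apply H.
  + apply J_union2; auto.
- intros IH. destruct (fam_cof _ IH) as [t [Ht Hsub]].
  destruct (xs_good t Ht) as [G _]. apply G. apply Hsub.
  exists ((1%Q, t) :: nil). split.
  + intros p [<-|[]]. exact Ht.
  + extensionality i. unfold combo. simpl. rewrite Q2R1. ring.
Qed.

End Constr.
End Ideal.
Open Scope R_scope.

Lemma wf_min {T : Type} (lt : T -> T -> Prop) (Hwf : well_founded lt) (Q : T -> Prop) :
  (exists b, Q b) -> exists b, Q b /\ forall c, lt c b -> ~ Q c.
Proof.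
intros [b Qb]. apply NNPP. intros H.
assert (forall x, ~ Q x). { intros x. induction x as [x IH] using (well_founded_induction Hwf).
  intros Qx. apply H. exists x. split; auto. }
eapply H0; eauto.
Qed.

Lemma abstract_main (n : nat) (I : set_ n -> Prop)
  (I_sub : forall A B : set_ n, subset_ A B -> I B -> I A)
  (I_cunion : forall A : nat -> set_ n, (forall k, I (A k)) -> I (fun x => exists k, A k x))
  (I_full : ~ I (fun _ => True))
  (I_single : forall p, I (fun x => x = p))
  (I_scale : forall (r : R) (A : set_ n), r <> 0 -> I A -> I (fun y => A (fun i => r * y i)))
  (J : set_ n -> Prop)
  (J_sub : forall A B : set_ n, subset_ A B -> J B -> J A)
  (J_union2 : forall A B : set_ n, J A -> J B -> J (fun x => A x \/ B x))
  (J_single : forall p, J (fun x => x = p))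
  (Z : set_ n) (JZ : J Z) (IZc : I (fun x => ~ Z x)) (Hcov : covt_ge_cof I) :
  exists H : set_ n, Q_subspace H /\ J H /\ ~ I H.
Proof.
destruct (WO.wo_exists (set_ n)) as [lt [lt_wf [lt_trans [lt_total _]]]].
destruct (WO.wo_exists (LE (set_ n))) as [lt2 [lt2_wf [lt2_trans [lt2_total _]]]].
assert (HP : exists P : set_ n -> Prop, ~ smallS n I (LS P) /\
   forall b, P b -> smallS n I (LS (fun v => lt v b))).
{ destruct (classic (exists b, ~ smallS n I (LS (fun v => lt v b)))) as [Hb|Hb].
  - destruct (wf_min lt lt_wf _ Hb) as [b [Hb1 Hb2]].
    exists (fun v => lt v b). split; auto.
    intros c Hc. apply NNPP. apply Hb2, Hc.
  - exists (fun _ => True). split.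
    + intros Hs. apply Hs.
      exists (fun s => fun x => match leaves (proj1_sig s) with v :: _ => I v /\ v x | nil => False end).
      split.
      * intros [t Ht]. simpl. destruct (leaves t) as [|v l].
        -- apply (I_sub _ (fun x => x = (fun _ => 0))). intros x []. apply I_single.
        -- destruct (classic (I v)) as [Iv|Iv].
           ++ apply (I_sub _ v); auto. intros x [_ H]; exact H.
           ++ apply (I_sub _ (fun x => x = (fun _ => 0))). intros x [H _]; contradiction. apply I_single.
      * intros C HC. exists (exist _ ((1%Q, inr C) :: nil) (fun _ _ => Logic.I)). simpl.
        intros x Cx. split; auto.
    + intros b _. apply NNPP. intros Hn. apply Hb. exists b. exact Hn. }
destruct HP as [P [P_big P_seg]].
pose proof P_big as HB. unfold smallS in HB. apply NNPP in HB.
destruct HB as [g [Hg1 Hg2]].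
apply (constr_main n I I_sub I_cunion I_full I_single I_scale J J_sub J_union2 J_single
  Z JZ IZc Hcov (set_ n) lt lt_wf lt_trans lt_total lt2 lt2_wf lt2_trans lt2_total P P_big P_seg
  (fun t => fun x => exists h : LS P t, g (exist _ t h) x)).
- intros t Ht. apply (I_sub _ (g (exist _ t Ht))); [|apply Hg1].
  intros x [h Hx]. rewrite (proof_irrelevance _ h Ht) in Hx. exact Hx.
- intros C HC. destruct (Hg2 C HC) as [[t Ht] Hs]. exists t. split; auto.
  intros x Cx. exists Ht. apply Hs, Cx.
Qed.
Open Scope R_scope.

Lemma le_eps : forall a b : R, (forall e, 0 < e -> a < b + e) -> a <= b.
Proof. intros a b H. destruct (Rle_dec a b) as [|C]; auto. specialize (H ((a - b)/2)). lra. Qed.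

Lemma half_pow_pos : forall k, 0 < (1/2)^k.
Proof. intros k. apply pow_lt. lra. Qed.

Lemma half_pow_le : forall N M, (N <= M)%nat -> (1/2)^M <= (1/2)^N.
Proof.
intros N M H. induction H. lra. simpl. pose proof (half_pow_pos m). lra.
Qed.

Lemma half_pow_small : forall eps, 0 < eps -> exists N, (1/2)^N < eps.
Proof.
intros eps He. destruct (pow_lt_1_zero (1/2)) with (y := eps) as [N HN].
rewrite Rabs_right; lra. auto.
exists N. specialize (HN N (le_n _)). rewrite Rabs_right in HN; auto.
apply Rle_ge, Rlt_le, half_pow_pos.
Qed.

Lemma cauchy_lim : forall (u r : nat -> R), (forall k, r k <= (1/2)^k) ->
  (forall k m, (k <= m)%nat -> Rabs (u m - u k) <= r k) ->
  exists l, forall k, Rabs (l - u k) <= r k.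
Proof.
intros u r Hr H.
assert (C : Cauchy_crit u).
{ intros eps He. destruct (half_pow_small (eps/2)) as [N HN]. lra.
  exists N. intros a b Ha Hb. unfold R_dist.
  pose proof (H N a Ha). pose proof (H N b Hb). pose proof (Hr N).
  replace (u a - u b) with ((u a - u N) - (u b - u N)) by ring.
  eapply Rle_lt_trans. apply Rabs_triang. rewrite Rabs_Ropp. lra. }
destruct (R_complete u C) as [l Hl]. exists l. intros k.
apply le_eps. intros e He. destruct (Hl e He) as [N HN].
specialize (HN (max N k) (Nat.le_max_l _ _)). unfold R_dist in HN.
pose proof (H k (max N k) (Nat.le_max_r _ _)).
replace (l - u k) with ((u (max N k) - u k) - (u (max N k) - l)) by ring.
eapply Rle_lt_trans. apply Rabs_triang. rewrite Rabs_Ropp. lra.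
Qed.

Lemma fin_min : forall n (Q : Fin.t n -> R -> Prop),
  (forall i e e', 0 < e' <= e -> Q i e -> Q i e') ->
  (forall i, exists e, 0 < e /\ Q i e) -> exists e, 0 < e /\ forall i, Q i e.
Proof.
induction n as [|n IH]; intros Q Hm H.
- exists 1. split. lra. intros i. apply (Fin.case0 (fun i => Q i 1) i).
- destruct (H Fin.F1) as [e1 [He1 Q1]].
  destruct (IH (fun i => Q (Fin.FS i))) as [e2 [He2 Q2]].
  + intros i e e' He. apply Hm; auto.
  + intros i. apply H.
  + exists (Rmin e1 e2). split. apply Rmin_glb_lt; auto.
    intros i. apply (Fin.caseS' i (fun i => Q i (Rmin e1 e2))).
    * apply (Hm _ e1); auto. split. apply Rmin_glb_lt; auto. apply Rmin_l.
    * intros p. apply (Hm _ e2); auto. split. apply Rmin_glb_lt; auto. apply Rmin_r.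
Qed.

Definition fcons {n} {A : Type} (a : A) (f : Fin.t n -> A) : Fin.t (S n) -> A :=
  fun i => Fin.caseS' i (fun _ => A) a f.

Lemma fcons_eta : forall n A (f : Fin.t (S n) -> A), f = fcons (f Fin.F1) (fun i => f (Fin.FS i)).
Proof.
intros n A f. extensionality i. apply (Fin.caseS' i (fun i => f i = fcons (f Fin.F1) (fun i => f (Fin.FS i)) i)); reflexivity.
Qed.

Lemma fin_forall_S : forall n (Q : Fin.t (S n) -> Prop), Q Fin.F1 -> (forall i, Q (Fin.FS i)) -> forall i, Q i.
Proof. intros n Q H1 H2 i. apply (Fin.caseS' i Q); auto. Qed.

Lemma fin_bool_max : forall n (Q : (Fin.t n -> bool) -> nat -> Prop),
  (forall s N N', (N <= N')%nat -> Q s N -> Q s N') ->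
  (forall s, exists N, Q s N) -> exists N, forall s, Q s N.
Proof.
induction n as [|n IH]; intros Q Hm H.
- destruct (H (fun _ => true)) as [N HN]. exists N. intros s.
  replace s with (fun _ : Fin.t 0 => true); auto.
  extensionality i. apply (Fin.case0 (fun i => true = s i) i).
- destruct (IH (fun t N => Q (fcons true t) N /\ Q (fcons false t) N)) as [N HN].
  + intros s N N' HN [H1 H2]. split; eapply Hm; eauto.
  + intros t. destruct (H (fcons true t)) as [N1 H1]. destruct (H (fcons false t)) as [N2 H2].
    exists (max N1 N2). split; [apply (Hm _ N1); [lia|exact H1] | apply (Hm _ N2); [lia|exact H2]].
  + exists N. intros s. rewrite (fcons_eta n bool s).
    destruct (s Fin.F1); apply HN.
Qed.
Open Scope R_scope.

Section Meager.
Variable n : nat.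

Lemma Rabs_mul_sub : forall r a b, r <> 0 -> Rabs (r * a - b) = Rabs r * Rabs (a - b / r).
Proof. intros r a b Hr. rewrite <- Rabs_mult. f_equal. field. auto. Qed.

Lemma nd_scale : forall (N : set_ n) r, r <> 0 -> nowhere_dense N ->
  nowhere_dense (fun y => N (fun i => r * y i)).
Proof.
intros N r Hr HN x rho Hrho.
assert (Har : 0 < Rabs r) by (apply Rabs_pos_lt; auto).
destruct (HN (fun i => r * x i) (Rabs r * rho)) as [y' [rho' [Hp [Hsub Hav]]]].
{ apply Rmult_lt_0_compat; auto. }
assert (Key : forall z, ball (fun i => y' i / r) (rho' / Rabs r) z -> ball y' rho' (fun i => r * z i)).
{ intros z Hz i. specialize (Hz i). simpl in Hz. rewrite Rabs_mul_sub by auto.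
  apply (Rmult_lt_compat_l (Rabs r)) in Hz; auto.
  replace (Rabs r * (rho' / Rabs r)) with rho' in Hz by (field; lra). exact Hz. }
exists (fun i => y' i / r), (rho' / Rabs r). split; [|split].
- apply Rdiv_lt_0_compat; auto.
- intros z Hz i. specialize (Hsub _ (Key z Hz) i). simpl in Hsub.
  rewrite Rabs_mul_sub in Hsub by auto.
  replace (r * x i / r) with (x i) in Hsub by (field; auto).
  apply (Rmult_lt_reg_l (Rabs r)); auto.
- intros z Hz. apply Hav. apply Key, Hz.
Qed.

Lemma meager_sub : forall A B : set_ n, subset_ A B -> meager n B -> meager n A.
Proof. intros A B Hs [N [H1 H2]]. exists N. split; auto. Qed.

Lemma meager_scale : forall (r : R) (A : set_ n), r <> 0 -> meager n A ->
  meager n (fun y => A (fun i => r * y i)).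
Proof.
intros r A Hr [N [H1 H2]]. exists (fun k => fun y => N k (fun i => r * y i)). split.
- intros k. apply nd_scale; auto.
- intros x Hx. apply H2, Hx.
Qed.

Lemma meager_cunion : forall A : nat -> set_ n, (forall k, meager n (A k)) ->
  meager n (fun x => exists k, A k x).
Proof.
intros A H.
set (F := fun k => epsilon (inhabits (fun _ : nat => fun _ : pt n => False))
  (fun N => (forall j, nowhere_dense (N j)) /\ forall x, A k x -> exists j, N j x)).
assert (HF : forall k, (forall j, nowhere_dense (F k j)) /\ forall x, A k x -> exists j, F k j x).
{ intros k. apply epsilon_spec. apply H. }
exists (fun m => let (k, j) := of_nat m in F k j). split.
- intros m. destruct (of_nat m) as [k j]. apply HF.
- intros x [k Hk]. destruct (proj2 (HF k) x Hk) as [j Hj].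
  exists (to_nat (k, j)). rewrite cancel_of_to. exact Hj.
Qed.

Hypothesis Hn : (1 <= n)%nat.

Lemma nd_single : forall p : pt n, nowhere_dense (fun x => x = p).
Proof.
intros p x r Hr.
set (y := fun i => x i + (if Rle_dec (p i) (x i) then r/2 else - (r/2))).
exists y, (r/4). split; [lra|split].
- intros z Hz i. specialize (Hz i). simpl in Hz. unfold y in Hz.
  destruct (Rle_dec (p i) (x i)); apply Rabs_def2 in Hz; apply Rabs_def1; lra.
- intros z Hz E. subst z. destruct n as [|m]; [lia|].
  specialize (Hz Fin.F1). unfold y in Hz.
  destruct (Rle_dec (p Fin.F1) (x Fin.F1)); apply Rabs_def2 in Hz; lra.
Qed.

Lemma meager_single : forall p : pt n, meager n (fun x => x = p).
Proof.
intros p. exists (fun _ => fun x => x = p). split.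
- intros _. apply nd_single.
- intros x Hx. exists O. exact Hx.
Qed.

Lemma ball_self : forall (y : pt n) r, 0 < r -> ball y r y.
Proof. intros y r Hr i. rewrite Rminus_diag, Rabs_R0. exact Hr. Qed.

Lemma meager_full : ~ meager n (fun _ => True).
Proof.
intros [Nk [Hnd Hcov]].
set (Pr := fun (k : nat) (yr yr' : pt n * R) => 0 < snd yr' /\
   subset_ (ball (fst yr') (snd yr')) (ball (fst yr) (snd yr)) /\
   forall z, ball (fst yr') (snd yr') z -> ~ Nk k z).
set (nx := fun k yr => epsilon (inhabits yr) (Pr k yr)).
set (step := fun k yr => (fst (nx k yr), Rmin (snd (nx k yr) / 2) ((1/2)^(S k)))).
set (sq := fix sq k := match k with O => ((fun _ : Fin.t n => 0), 1) | S k => step k (sq k) end).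
assert (Hnx : forall k yr, 0 < snd yr -> Pr k yr (nx k yr)).
{ intros k [y r] Hr. apply epsilon_spec. simpl in Hr.
  destruct (Hnd k y r Hr) as [y' [r' [H1 [H2 H3]]]]. exists (y', r'). split; auto. }
assert (Hpos : forall k, 0 < snd (sq k) /\ snd (sq k) <= (1/2)^k).
{ induction k as [|k IH]; simpl. lra.
  destruct (Hnx k (sq k) (proj1 IH)) as [Hp _]. split.
  - apply Rmin_glb_lt. lra. apply (half_pow_pos (S k)).
  - apply Rmin_r. }
assert (Hnest1 : forall k, subset_ (ball (fst (sq (S k))) (snd (sq (S k)))) (ball (fst (sq k)) (snd (sq k)))).
{ intros k z Hz. destruct (Hnx k (sq k) (proj1 (Hpos k))) as [Hp [Hs _]].
  apply Hs. intros i. specialize (Hz i). change (sq (S k)) with (step k (sq k)) in Hz.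
  unfold step in Hz. cbn [fst snd] in Hz.
  pose proof (Rmin_l (snd (nx k (sq k)) / 2) ((1/2)^(S k))). lra. }
assert (Hnest : forall k m, (k <= m)%nat -> subset_ (ball (fst (sq m)) (snd (sq m))) (ball (fst (sq k)) (snd (sq k)))).
{ intros k m Hkm. induction Hkm. intros z Hz; exact Hz.
  intros z Hz. apply IHHkm, Hnest1, Hz. }
assert (Hlim : forall i, exists l, forall k, Rabs (l - fst (sq k) i) <= snd (sq k)).
{ intros i. apply cauchy_lim.
  - intros k. apply Hpos.
  - intros k m Hkm. apply Rlt_le. apply (Hnest k m Hkm). apply ball_self, Hpos. }
set (p := fun i => epsilon (inhabits 0) (fun l => forall k, Rabs (l - fst (sq k) i) <= snd (sq k))).
assert (Hp : forall i k, Rabs (p i - fst (sq k) i) <= snd (sq k)).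
{ intros i. apply (epsilon_spec (inhabits 0) (fun l => forall k, Rabs (l - fst (sq k) i) <= snd (sq k))). apply Hlim. }
destruct (Hcov p Logic.I) as [k Hk].
destruct (Hnx k (sq k) (proj1 (Hpos k))) as [Hp1 [_ Hav]].
apply (Hav p); auto. intros i. specialize (Hp i (S k)). change (sq (S k)) with (step k (sq k)) in Hp.
unfold step in Hp. cbn [fst snd] in Hp.
pose proof (Rmin_l (snd (nx k (sq k)) / 2) ((1/2)^(S k))). lra.
Qed.

End Meager.
Open Scope R_scope.

Definition sumlist {A : Type} (f : A -> R) (l : list A) : R := fold_right (fun x acc => f x + acc) 0 l.

Lemma sumlist_app {A} (f : A -> R) l1 l2 : sumlist f (l1 ++ l2) = sumlist f l1 + sumlist f l2.
Proof. induction l1; simpl; [ring|rewrite IHl1; ring]. Qed.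

Lemma sumlist_map {A B} (f : B -> R) (h : A -> B) l : sumlist f (map h l) = sumlist (fun x => f (h x)) l.
Proof. induction l; simpl; auto. rewrite IHl; auto. Qed.

Lemma sumlist_nonneg {A} (f : A -> R) l : (forall x, 0 <= f x) -> 0 <= sumlist f l.
Proof. intros H. induction l; simpl. lra. pose proof (H a). lra. Qed.

Lemma sumlist_le {A} (f g : A -> R) l : (forall x, In x l -> f x <= g x) -> sumlist f l <= sumlist g l.
Proof. induction l; simpl; intros H. lra. pose proof (H a (or_introl eq_refl)).
  assert (sumlist f l <= sumlist g l) by (apply IHl; auto). lra. Qed.

Lemma sumlist_seq (g : nat -> R) M : sumlist g (seq 0 (S M)) = sum_f_R0 g M.
Proof.
induction M as [|M IH]. simpl. ring.
rewrite seq_S, sumlist_app, IH. simpl. ring.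
Qed.

Lemma sumlist_incl {A} (f : A -> R) : forall L L2, NoDup L -> incl L L2 -> (forall x, 0 <= f x) ->
  sumlist f L <= sumlist f L2.
Proof.
induction L as [|a L IH]; intros L2 Hnd Hin Hf; simpl.
- apply sumlist_nonneg; auto.
- assert (Ha : In a L2) by (apply Hin; simpl; auto).
  apply in_split in Ha. destruct Ha as [l1 [l2 ->]].
  inversion Hnd; subst.
  assert (sumlist f L <= sumlist f (l1 ++ l2)).
  { apply IH; auto. intros x Hx. assert (In x (l1 ++ a :: l2)) by (apply Hin; simpl; auto).
    apply in_app_or in H. apply in_or_app. destruct H as [H|[H|H]]; auto. subst; contradiction. }
  rewrite !sumlist_app in *. simpl. lra.
Qed.

Lemma sum_zero : forall N, sum_f_R0 (fun _ => 0) N = 0.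
Proof. induction N; simpl; auto. rewrite IHN; ring. Qed.

Lemma geom_half : forall M, sum_f_R0 (fun k => (1/2)^(S k)) M = 1 - (1/2)^(S M).
Proof. induction M as [|M IH]. simpl. field. rewrite tech5, IH. simpl. field. Qed.

Lemma Rabs_mul_sub' : forall r a b, r <> 0 -> Rabs (r * a - b) = Rabs r * Rabs (a - b / r).
Proof. intros r a b Hr. rewrite <- Rabs_mult. f_equal. field. auto. Qed.

Lemma sum_lt : forall (f g : nat -> R) N, (forall k, f k < g k) -> sum_f_R0 f N < sum_f_R0 g N.
Proof. intros f g N H. induction N; simpl. apply H. pose proof (H (S N)). lra. Qed.

Section Null.
Variable n : nat.

Lemma null_sub : forall A B : set_ n, subset_ A B -> null_set n B -> null_set n A.
Proof.
intros A B Hs HB eps He. destruct (HB eps He) as [c [s [H1 [H2 H3]]]].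
exists c, s. split; auto.
Qed.

Lemma null_scale : forall (r : R) (A : set_ n), r <> 0 -> null_set n A ->
  null_set n (fun y => A (fun i => r * y i)).
Proof.
intros r A Hr HA eps He.
assert (Har : 0 < Rabs r) by (apply Rabs_pos_lt; auto).
assert (Hrn : 0 < Rabs r ^ n) by (apply pow_lt; auto).
destruct (HA (eps * Rabs r ^ n)) as [c [s [H1 [H2 H3]]]].
{ apply Rmult_lt_0_compat; auto. }
exists (fun k i => c k i / r), (fun k => s k / Rabs r). split; [|split].
- intros k. unfold Rdiv. apply Rmult_le_pos; [apply H1|left; apply Rinv_0_lt_compat; auto].
- intros y Hy. destruct (H2 _ Hy) as [k Hk]. exists k. intros i. specialize (Hk i).
  simpl in Hk. rewrite (Rabs_mul_sub' r) in Hk by auto.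
  apply (Rmult_le_reg_l (Rabs r)); auto.
  replace (Rabs r * (s k / Rabs r / 2)) with (s k / 2) by (field; lra). exact Hk.
- intros N. specialize (H3 N).
  replace (sum_f_R0 (fun k => (s k / Rabs r) ^ n) N) with (/ Rabs r ^ n * sum_f_R0 (fun k => s k ^ n) N).
  + apply (Rmult_lt_reg_l (Rabs r ^ n)); auto. rewrite <- Rmult_assoc, Rinv_r by lra. lra.
  + rewrite scal_sum. apply sum_eq. intros k _. unfold Rdiv. rewrite Rpow_mult_distr, pow_inv. ring.
Qed.

Hypothesis Hn : (1 <= n)%nat.

Lemma null_single : forall p : pt n, null_set n (fun x => x = p).
Proof.
intros p eps He. exists (fun _ => p), (fun _ => 0). split; [|split].
- intros; lra.
- intros x ->. exists O. intros i. rewrite Rminus_diag, Rabs_R0. lra.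
- intros N. rewrite (sum_eq _ (fun _ => 0)). rewrite sum_zero. auto.
  intros k _. destruct n; [lia|]. simpl. ring.
Qed.

Lemma null_cunion : forall A : nat -> set_ n, (forall k, null_set n (A k)) ->
  null_set n (fun x => exists k, A k x).
Proof.
intros A HA eps He.
set (Pk := fun k (cs : (nat -> pt n) * (nat -> R)) => (forall j, 0 <= snd cs j) /\
   (forall x, A k x -> exists j, cube (fst cs j) (snd cs j) x) /\
   (forall N, sum_f_R0 (fun j => snd cs j ^ n) N < eps * (1/2)^(S k))).
set (F := fun k => epsilon (inhabits ((fun _ : nat => fun _ : Fin.t n => 0), (fun _ : nat => 0))) (Pk k)).
assert (HF : forall k, Pk k (F k)).
{ intros k. apply epsilon_spec. destruct (HA k (eps * (1/2)^(S k))) as [c [s Hcs]].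
  apply Rmult_lt_0_compat; auto. apply half_pow_pos. exists (c, s). exact Hcs. }
exists (fun m => let (k, j) := of_nat m in fst (F k) j), (fun m => let (k, j) := of_nat m in snd (F k) j).
split; [|split].
- intros m. destruct (of_nat m) as [k j]. apply HF.
- intros x [k Hk]. destruct (proj1 (proj2 (HF k)) x Hk) as [j Hj].
  exists (to_nat (k, j)). rewrite cancel_of_to. exact Hj.
- intros M.
  set (g := fun p : nat * nat => let (k, j) := p in snd (F k) j ^ n).
  assert (Hg : forall p, 0 <= g p).
  { intros [k j]. unfold g. apply pow_le. apply HF. }
  replace (sum_f_R0 _ M) with (sumlist g (map of_nat (seq 0 (S M)))).
  2: { rewrite sumlist_map, sumlist_seq. apply sum_eq. intros m _. unfold g. destruct (of_nat m); auto. }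
  eapply Rle_lt_trans.
  apply (sumlist_incl g _ (flat_map (fun k => map (fun j => (k, j)) (seq 0 (S M))) (seq 0 (S M)))); auto.
  + apply FinFun.Injective_map_NoDup. intros a b E. rewrite <- (cancel_to_of a), <- (cancel_to_of b), E. reflexivity.
    apply seq_NoDup.
  + intros [k j] Hp. apply in_map_iff in Hp. destruct Hp as [m [Em Hm]].
    apply in_seq in Hm. pose proof (to_nat_non_decreasing k j) as Hnd.
    rewrite <- Em, cancel_to_of in Hnd.
    apply in_flat_map. exists k. split. apply in_seq. lia.
    apply in_map. apply in_seq. lia.
  + assert (E : forall K, sumlist g (flat_map (fun k => map (fun j => (k, j)) (seq 0 (S M))) (seq 0 K))
       = sum_f_R0 (fun k => sum_f_R0 (fun j => snd (F k) j ^ n) M) (pred K) /\ (K <> 0)%nat \/ K = 0%nat).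
    { intros K. destruct K as [|K]; [right; auto|left; split; [|lia]]. simpl pred.
      induction K as [|K IH].
      - change (seq 0 1) with (0%nat :: nil). cbn [flat_map sum_f_R0]. rewrite app_nil_r, sumlist_map, sumlist_seq. reflexivity.
      - rewrite (seq_S (S K) 0), flat_map_app, sumlist_app, IH. cbn [flat_map sum_f_R0 plus]. rewrite app_nil_r, sumlist_map, sumlist_seq.
        reflexivity. }
    destruct (E (S M)) as [[E1 _]|E1]; [|discriminate]. rewrite E1. simpl pred.
    apply Rlt_le_trans with (sum_f_R0 (fun k => eps * (1/2)^(S k)) M).
    * apply sum_lt. intros k. apply HF.
    * rewrite (sum_eq _ (fun k => (1/2)^(S k) * eps)) by (intros; ring).
      rewrite <- scal_sum, geom_half. pose proof (half_pow_pos (S M)).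
      assert (eps * (1 - (1/2)^(S M)) <= eps * 1) by (apply Rmult_le_compat_l; lra). lra.
Qed.
End Null.
Open Scope R_scope.

Lemma count_interval : forall (Q : nat -> Prop) (dec : forall j, {Q j} + {~ Q j}) a b,
  a - 1 <= b -> (forall j, Q j -> a <= INR j <= b) -> forall M,
  sum_f_R0 (fun j => if dec j then 1 else 0) M <= Rmax 0 (Rmin (INR M) b - a + 1).
Proof.
intros Q dec a b Hab HQ M. induction M as [|M IH].
- simpl. destruct (dec 0%nat) as [q|q].
  + specialize (HQ _ q). simpl in HQ. unfold Rmax, Rmin.
    destruct (Rle_dec 0 b); destruct (Rle_dec 0 (0 - a + 1)); lra.
  + unfold Rmax. destruct (Rle_dec 0 _); lra.
- simpl sum_f_R0. rewrite S_INR. destruct (dec (S M)) as [q|q].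
  + specialize (HQ _ q). rewrite S_INR in HQ. pose proof (pos_INR M).
    revert IH. unfold Rmax, Rmin.
    destruct (Rle_dec (INR M) b); destruct (Rle_dec (INR M + 1) b);
    destruct (Rle_dec 0 (INR M - a + 1)); destruct (Rle_dec 0 (INR M + 1 - a + 1));
    destruct (Rle_dec 0 (b - a + 1)); intros; lra.
  + revert IH. unfold Rmax, Rmin.
    destruct (Rle_dec (INR M) b); destruct (Rle_dec (INR M + 1) b);
    destruct (Rle_dec 0 (INR M - a + 1)); destruct (Rle_dec 0 (INR M + 1 - a + 1));
    destruct (Rle_dec 0 (b - a + 1)); destruct (Rle_dec 0 (INR M - a + 1));
    intros; lra.
Qed.

Definition ind1 (m : nat) (a w : R) (j : nat) : R :=
  if Rle_dec (Rabs (INR j / INR m - a)) (w / 2) then 1 else 0.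

Lemma count1 : forall m a w, (1 <= m)%nat -> 0 <= w ->
  sum_f_R0 (ind1 m a w) m <= w * INR m + 1.
Proof.
intros m a w Hm Hw.
assert (Hm' : 0 < INR m) by (apply lt_0_INR; lia).
set (al := INR m * a - INR m * w / 2). set (be := INR m * a + INR m * w / 2).
assert (H := count_interval (fun j => Rabs (INR j / INR m - a) <= w / 2)
  (fun j => Rle_dec (Rabs (INR j / INR m - a)) (w / 2)) al be).
assert (Hab : al - 1 <= be).
{ unfold al, be. assert (0 <= INR m * w) by (apply Rmult_le_pos; lra). lra. }
specialize (H Hab).
assert (HQ : forall j, Rabs (INR j / INR m - a) <= w / 2 -> al <= INR j <= be).
{ intros j Hj. unfold al, be.
  assert (H1 : a - w / 2 <= INR j / INR m) by (revert Hj; unfold Rabs; destruct (Rcase_abs _); intros; lra).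
  assert (H2 : INR j / INR m <= a + w / 2) by (revert Hj; unfold Rabs; destruct (Rcase_abs _); intros; lra).
  apply (Rmult_le_compat_l (INR m)) in H1; [|lra]. apply (Rmult_le_compat_l (INR m)) in H2; [|lra].
  replace (INR m * (INR j / INR m)) with (INR j) in * by (field; lra).
  split; nra. }
specialize (H HQ m). unfold ind1.
eapply Rle_trans. apply H.
unfold Rmax, Rmin. unfold al, be in *.
destruct (Rle_dec (INR m) _); destruct (Rle_dec 0 _); nra.
Qed.

Definition grid (m : nat) {n} (p : pt n) := forall i, exists j, (j <= m)%nat /\ p i = INR j / INR m.

Definition tailp {n} (c : pt (S n)) : pt n := fun i => c (Fin.FS i).

Lemma sumlist_swap {A} (h : nat -> A -> R) L M :
  sum_f_R0 (fun j => sumlist (h j) L) M = sumlist (fun x => sum_f_R0 (fun j => h j x) M) L.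
Proof.
induction L as [|x L IH]; simpl.
- apply sum_zero.
- rewrite <- IH. rewrite <- sum_plus. reflexivity.
Qed.

Lemma counting : forall n m (L : list (pt n * R)), (1 <= m)%nat ->
  (forall cw, In cw L -> 0 <= snd cw) ->
  (forall p : pt n, grid m p -> exists cw, In cw L /\ cube (fst cw) (snd cw) p) ->
  (INR m + 1) ^ n <= sumlist (fun cw => (snd cw * INR m + 1) ^ n) L.
Proof.
induction n as [|n IH]; intros m L Hm Hpos Hcov.
- destruct (Hcov (fun _ => 0)) as [cw [Hin _]].
  { intros i. apply (Fin.case0 (fun i => exists j, (j <= m)%nat /\ 0 = INR j / INR m) i). }
  destruct L as [|a L]; [destruct Hin|].
  assert (E : sumlist (fun cw : pt 0 * R => (snd cw * INR m + 1) ^ 0) (a :: L) = 1 + sumlist (fun cw : pt 0 * R => (snd cw * INR m + 1) ^ 0) L) by reflexivity.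
  rewrite E, pow_O.
  assert (0 <= sumlist (fun cw : pt 0 * R => (snd cw * INR m + 1) ^ 0) L) by (apply sumlist_nonneg; intros; rewrite pow_O; lra).
  lra.
- assert (Hm' : 0 < INR m) by (apply lt_0_INR; lia).
  set (Lj := fun j => flat_map (fun cw : pt (S n) * R =>
           if Rle_dec (Rabs (INR j / INR m - fst cw Fin.F1)) (snd cw / 2)
           then (tailp (fst cw), snd cw) :: nil else nil) L).
  assert (Hj : forall j, (j <= m)%nat ->
     (INR m + 1) ^ n <= sumlist (fun cw => ind1 m (fst cw Fin.F1) (snd cw) j * (snd cw * INR m + 1) ^ n) L).
  { intros j Hjm.
    replace (sumlist (fun cw => ind1 m (fst cw Fin.F1) (snd cw) j * (snd cw * INR m + 1) ^ n) L)
      with (sumlist (fun cw => (snd cw * INR m + 1) ^ n) (Lj j)).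
    - apply IH; auto.
      + intros cw Hcw. unfold Lj in Hcw. apply in_flat_map in Hcw. destruct Hcw as [cw0 [H0 H1]].
        destruct (Rle_dec _ _); [|destruct H1]. destruct H1 as [<-|[]]. apply Hpos, H0.
      + intros p' Hp'. destruct (Hcov (fcons (INR j / INR m) p')) as [[c w] [Hin Hc]].
        * intros i. apply (Fin.caseS' i (fun i => exists j0, (j0 <= m)%nat /\ fcons (INR j / INR m) p' i = INR j0 / INR m)).
          exists j; auto. intros i'. apply Hp'.
        * exists (tailp c, w). split.
          -- unfold Lj. apply in_flat_map. exists (c, w). split; auto. simpl.
             destruct (Rle_dec _ _) as [_|C]; [simpl; auto|]. exfalso. apply C. apply (Hc Fin.F1).
          -- intros i. apply (Hc (Fin.FS i)).
    - unfold Lj. clear. induction L as [|[c w] L IH]; simpl; auto.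
      rewrite sumlist_app, IH. unfold ind1. simpl. destruct (Rle_dec _ _); simpl; ring. }
  apply Rle_trans with (sum_f_R0 (fun j => sumlist (fun cw => ind1 m (fst cw Fin.F1) (snd cw) j * (snd cw * INR m + 1) ^ n) L) m).
  + apply Rle_trans with (sum_f_R0 (fun _ => (INR m + 1) ^ n) m).
    * rewrite sum_cte. rewrite S_INR. simpl. lra.
    * apply sum_Rle. intros j Hj'. apply Hj; auto.
  + rewrite sumlist_swap. apply sumlist_le. intros [c w] Hin. simpl.
    rewrite <- scal_sum.
    assert (Hw : 0 <= w) by (apply (Hpos (c, w)), Hin).
    pose proof (count1 m (c Fin.F1) w Hm Hw).
    assert (0 <= (w * INR m + 1) ^ n) by (apply pow_le; nra).
    rewrite Rmult_comm. apply Rmult_le_compat_r; auto.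
Qed.
Open Scope R_scope.

Section HB.
Variable n : nat.
Variable c : nat -> pt n.
Variable t : nat -> R.

Definition ocube (cc : pt n) (tt : R) (x : pt n) := forall i, Rabs (x i - cc i) < tt / 2.
Definition box (a : pt n) (h : R) (x : pt n) := forall i, a i <= x i <= a i + h.
Definition fc (a : pt n) (h : R) := exists N, forall x, box a h x -> exists k, (k < N)%nat /\ ocube (c k) (t k) x.
Definition sub (a : pt n) (h : R) (s : Fin.t n -> bool) : pt n :=
  fun i => a i + (if s i then h / 2 else 0).

Lemma split_fc : forall a h, 0 <= h -> (forall s, fc (sub a h s) (h / 2)) -> fc a h.
Proof.
intros a h Hh H.
destruct (fin_bool_max n (fun s N => forall x, box (sub a h s) (h/2) x -> exists k, (k < N)%nat /\ ocube (c k) (t k) x)) as [N HN].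
- intros s N N' HNN HQ x Hx. destruct (HQ x Hx) as [k [Hk Hc]]. exists k. split; auto. lia.
- intros s. apply H.
- exists N. intros x Hx.
  apply (HN (fun i => if Rle_dec (x i) (a i + h / 2) then false else true)).
  intros i. unfold sub. specialize (Hx i). destruct (Rle_dec (x i) (a i + h / 2)); lra.
Qed.

Lemma HB_thm : (forall x, box (fun _ => 0) 1 x -> exists k, ocube (c k) (t k) x) -> fc (fun _ => 0) 1.
Proof.
intros Hcov. apply NNPP. intros Hnfc.
set (nxs := fun (ah : pt n * R) => epsilon (inhabits (fun _ : Fin.t n => true))
   (fun s => ~ fc (sub (fst ah) (snd ah) s) (snd ah / 2))).
set (sq := fix sq k := match k with O => ((fun _ : Fin.t n => 0), 1)
   | S k => (sub (fst (sq k)) (snd (sq k)) (nxs (sq k)), snd (sq k) / 2) end).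
assert (Hh : forall k, snd (sq k) = (1/2)^k).
{ induction k; simpl; auto. rewrite IHk. field. }
assert (Hnf : forall k, ~ fc (fst (sq k)) (snd (sq k))).
{ induction k as [|k IH]; auto.
  change (~ fc (sub (fst (sq k)) (snd (sq k)) (nxs (sq k))) (snd (sq k) / 2)).
  apply (epsilon_spec (inhabits (fun _ : Fin.t n => true)) (fun s => ~ fc (sub (fst (sq k)) (snd (sq k)) s) (snd (sq k) / 2))).
  apply NNPP. intros C. apply IH. apply split_fc.
  rewrite Hh. left; apply half_pow_pos.
  intros s. apply NNPP. intros C'. apply C. exists s. exact C'. }
assert (Hnest1 : forall k x, box (fst (sq (S k))) (snd (sq (S k))) x -> box (fst (sq k)) (snd (sq k)) x).
{ intros k x Hx i. specialize (Hx i). simpl in Hx. unfold sub in Hx.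
  pose proof (Hh k) as Hk. pose proof (half_pow_pos k).
  destruct (nxs (sq k) i); lra. }
assert (Hnest : forall k m, (k <= m)%nat -> forall x, box (fst (sq m)) (snd (sq m)) x -> box (fst (sq k)) (snd (sq k)) x).
{ intros k m Hkm. induction Hkm; auto. }
assert (Hcorner : forall k, box (fst (sq k)) (snd (sq k)) (fst (sq k))).
{ intros k i. rewrite Hh. pose proof (half_pow_pos k). lra. }
assert (Hlim : forall i, exists l, forall k, Rabs (l - fst (sq k) i) <= snd (sq k)).
{ intros i. apply cauchy_lim.
  - intros k. rewrite Hh. lra.
  - intros k m Hkm. specialize (Hnest k m Hkm _ (Hcorner m) i).
    rewrite Rabs_right; lra. }
set (p := fun i => epsilon (inhabits 0) (fun l => forall k, Rabs (l - fst (sq k) i) <= snd (sq k))).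
assert (Hp : forall i k, Rabs (p i - fst (sq k) i) <= (1/2)^k).
{ intros i k. rewrite <- Hh. revert k.
  apply (epsilon_spec (inhabits 0) (fun l => forall k, Rabs (l - fst (sq k) i) <= snd (sq k))). apply Hlim. }
assert (Hpu : box (fun _ => 0) 1 p).
{ intros i. split.
  - apply le_eps. intros e He. destruct (half_pow_small e He) as [K HK].
    pose proof (Hp i K). pose proof (Hnest 0%nat K (Nat.le_0_l K) _ (Hcorner K) i). simpl in H0.
    revert H. unfold Rabs. destruct (Rcase_abs _); intros; lra.
  - apply le_eps. intros e He. destruct (half_pow_small e He) as [K HK].
    pose proof (Hp i K).
    assert (Hc2 : box (fst (sq K)) (snd (sq K)) (fun j => fst (sq K) j + snd (sq K))).
    { intros j. rewrite Hh. pose proof (half_pow_pos K). lra. }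
    pose proof (Hnest 0%nat K (Nat.le_0_l K) _ Hc2 i). simpl in H0. rewrite Hh in H0.
    revert H. unfold Rabs. destruct (Rcase_abs _); intros; lra. }
destruct (Hcov p Hpu) as [k0 Hk0].
destruct (fin_min n (fun i e => Rabs (p i - c k0 i) + e < t k0 / 2)) as [mu [Hmu Hmu']].
{ intros i e e' [H1 H2] H3. lra. }
{ intros i. exists ((t k0 / 2 - Rabs (p i - c k0 i)) / 2). specialize (Hk0 i). split; lra. }
destruct (half_pow_small (mu / 2)) as [K HK]. lra.
apply (Hnf K). exists (S k0). intros x Hx. exists k0. split. lia.
intros i. specialize (Hx i). specialize (Hp i K). specialize (Hmu' i). rewrite Hh in Hx.
replace (x i - c k0 i) with ((x i - p i) + (p i - c k0 i)) by ring.
eapply Rle_lt_trans. apply Rabs_triang.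
assert (Rabs (x i - p i) <= 2 * (1/2)^K).
{ revert Hp. unfold Rabs. destruct (Rcase_abs (p i - _)); destruct (Rcase_abs (x i - p i)); intros; lra. }
lra.
Qed.
End HB.
Open Scope R_scope.

Lemma pow_le_self : forall x k, 0 <= x <= 1 -> (1 <= k)%nat -> x ^ k <= x.
Proof.
intros x k Hx Hk. destruct k as [|k]; [lia|]. simpl.
assert (x ^ k <= 1). { clear Hk. induction k; simpl. lra. nra. }
assert (0 <= x ^ k) by (apply pow_le; lra). nra.
Qed.

Lemma max_pow : forall a b k, 0 <= a -> 0 <= b -> Rmax a b ^ k <= a ^ k + b ^ k.
Proof.
intros a b k Ha Hb. pose proof (pow_le a k Ha). pose proof (pow_le b k Hb).
unfold Rmax. destruct (Rle_dec a b); lra.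
Qed.

Lemma geom_half2 : forall M, sum_f_R0 (fun k => (1/2)^k) M <= 2.
Proof.
intros M. rewrite (sum_eq _ (fun k => (1/2)^(S k) * 2)) by (intros; simpl; field).
rewrite <- scal_sum, geom_half. pose proof (half_pow_pos (S M)). lra.
Qed.

Lemma null_full : forall n, (1 <= n)%nat -> ~ null_set n (fun _ => True).
Proof.
intros n Hn Hnull.
assert (H4 : 0 < 4 ^ n) by (apply pow_lt; lra).
set (eps := / (4 * 4 ^ n)).
assert (Heps : 0 < eps) by (unfold eps; apply Rinv_0_lt_compat; lra).
assert (Heps1 : eps <= 1).
{ unfold eps. assert (1 <= 4 ^ n) by (apply pow_R1_Rle; lra).
  rewrite <- Rinv_1. apply Rinv_le_contravar; lra. }
destruct (Hnull eps Heps) as [c [s [Hs [Hcov Hsum]]]].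
set (d := fun k => eps * (1/2)^k).
assert (Hd : forall k, 0 < d k) by (intros; unfold d; apply Rmult_lt_0_compat; auto; apply half_pow_pos).
set (t := fun k => 2 * Rmax (s k) (d k)).
assert (Hocov : forall x, box n (fun _ => 0) 1 x -> exists k, ocube n (c k) (t k) x).
{ intros x _. destruct (Hcov x Logic.I) as [k Hk]. exists k. intros i. specialize (Hk i).
  unfold t. pose proof (Hs k). pose proof (Hd k).
  unfold Rmax. destruct (Rle_dec (s k) (d k)); lra. }
destruct (HB_thm n c t Hocov) as [N HN].
destruct N as [|N'].
{ destruct (HN (fun _ => 0)) as [k [Hk _]]. intros i; lra. lia. }
assert (Hpos : 0 < eps * (1/2)^(S N')) by (apply Rmult_lt_0_compat; auto; apply half_pow_pos).
destruct (INR_unbounded (/ (eps * (1/2)^(S N')) + 1)) as [m Hm].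
assert (Hinv : 0 < / (eps * (1/2)^(S N'))) by (apply Rinv_0_lt_compat; auto).
assert (Hm1 : (1 <= m)%nat). { destruct m; [change (INR 0) with 0 in Hm; lra|lia]. }
assert (Hmpos : 0 < INR m) by (apply lt_0_INR; lia).
assert (Hmbig : 1 < eps * (1/2)^(S N') * INR m).
{ apply (Rmult_lt_reg_l (/ (eps * (1/2)^(S N')))); auto.
  rewrite <- Rmult_assoc, Rinv_l by lra. lra. }
assert (Hcnt := counting n m (map (fun k => (c k, t k)) (seq 0 (S N'))) Hm1).
rewrite sumlist_map, sumlist_seq in Hcnt. simpl fst in Hcnt. simpl snd in Hcnt.
assert (Hc : (INR m + 1) ^ n <= sum_f_R0 (fun k => (t k * INR m + 1) ^ n) N').
{ apply Hcnt.
  - intros cw Hcw. apply in_map_iff in Hcw. destruct Hcw as [k [<- _]]. simpl.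
    unfold t. pose proof (Hd k). unfold Rmax; destruct (Rle_dec _ _); lra.
  - intros p Hp. destruct (HN p) as [k [Hk Hpk]].
    + intros i. destruct (Hp i) as [j [Hj Ej]]. rewrite Ej.
      pose proof (pos_INR j). apply le_INR in Hj. split.
      * apply Rmult_le_pos; auto. left; apply Rinv_0_lt_compat; auto.
      * apply (Rmult_le_reg_l (INR m)); auto. replace (INR m * (INR j / INR m)) with (INR j) by (field; lra). lra.
    + exists (c k, t k). split.
      * apply (in_map (fun k => (c k, t k))). apply in_seq. lia.
      * intros i. left. apply Hpk. }
clear Hcnt.
assert (Hbound : forall k, (k <= N')%nat ->
   (t k * INR m + 1) ^ n <= (4 * INR m) ^ n * (s k ^ n + d k ^ n)).
{ intros k Hk.
  assert (Hdk : eps * (1/2)^(S N') <= d k).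
  { unfold d. apply Rmult_le_compat_l; [lra|]. apply half_pow_le. lia. }
  assert (Htk : 1 <= t k * INR m).
  { unfold t. assert (d k <= Rmax (s k) (d k)) by apply Rmax_r. nra. }
  apply Rle_trans with ((2 * (t k * INR m)) ^ n).
  { apply pow_incr. lra. }
  replace (2 * (t k * INR m)) with ((4 * INR m) * Rmax (s k) (d k)) by (unfold t; ring).
  rewrite Rpow_mult_distr. apply Rmult_le_compat_l. apply pow_le. lra.
  apply max_pow. apply Hs. left; apply Hd. }
assert (Hsd : sum_f_R0 (fun k => (t k * INR m + 1) ^ n) N' <=
   (4 * INR m) ^ n * (sum_f_R0 (fun k => s k ^ n) N' + sum_f_R0 d N')).
{ apply Rle_trans with (sum_f_R0 (fun k => (4 * INR m)^n * (s k ^ n + d k ^ n)) N').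
  - apply sum_Rle. intros k Hk. apply Hbound; auto.
  - rewrite (sum_eq _ (fun k => (s k ^ n + d k ^ n) * (4 * INR m)^n)) by (intros; ring).
    rewrite <- scal_sum. apply Rmult_le_compat_l. apply pow_le; lra.
    rewrite <- sum_plus. apply sum_Rle. intros k _. apply Rplus_le_compat_l.
    apply pow_le_self; auto. split. left; apply Hd. unfold d.
    pose proof (half_pow_le 0 k (Nat.le_0_l k)). simpl in H. pose proof (half_pow_pos k). nra. }
assert (HD : sum_f_R0 d N' <= 2 * eps).
{ unfold d. rewrite (sum_eq _ (fun k => (1/2)^k * eps)) by (intros; ring).
  rewrite <- scal_sum. pose proof (geom_half2 N'). apply Rle_trans with (eps * 2); [apply Rmult_le_compat_l; [lra|exact H] | lra]. }
specialize (Hsum N').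
assert (Hmn : INR m ^ n <= (INR m + 1) ^ n) by (apply pow_incr; lra).
assert (Hmn0 : 0 < INR m ^ n) by (apply pow_lt; lra).
rewrite Rpow_mult_distr in Hsd.
assert (E : 4 ^ n * INR m ^ n * (3 * eps) = 3 / 4 * INR m ^ n) by (unfold eps; field; lra).
assert (4 ^ n * INR m ^ n * (sum_f_R0 (fun k => s k ^ n) N' + sum_f_R0 d N') < 4 ^ n * INR m ^ n * (3 * eps)).
{ apply Rmult_lt_compat_l. apply Rmult_lt_0_compat; auto. lra. }
lra.
Qed.
Open Scope R_scope.

Lemma rat_approx : forall y rho, 0 < rho -> exists c, Rabs (Q2R (qcode c) - y) < rho.
Proof.
intros y rho Hr.
destruct (INR_unbounded (/ rho)) as [b Hb].
assert (Hb1 : 0 < INR (S b)) by (apply lt_0_INR; lia).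
assert (Hbr : / INR (S b) < rho).
{ rewrite S_INR in *. assert (0 < / rho) by (apply Rinv_0_lt_compat; auto).
  apply (Rmult_lt_reg_l (INR b + 1)); [lra|]. rewrite Rinv_r by lra.
  apply (Rmult_lt_reg_l (/ rho)); auto. rewrite Rmult_1_r. 
  replace (/ rho * ((INR b + 1) * rho)) with (INR b + 1) by (field; lra). lra. }
set (r := y * INR (S b)).
destruct (archimed r) as [H1 H2].
set (z := (up r - 1)%Z).
destruct (qcode_surj (Qmake z (Pos.of_succ_nat b))) as [c Hc].
exists c. rewrite Hc. unfold Q2R. simpl Qnum. simpl Qden.
rewrite Zpos_P_of_succ_nat, <- Nat2Z.inj_succ, <- INR_IZR_INZ.
unfold z. rewrite minus_IZR. simpl (IZR 1).
assert (E : (IZR (up r) - 1) * / INR (S b) - y = (IZR (up r) - 1 - r) / INR (S b)) by (unfold r; field; lra).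
rewrite E. unfold Rdiv. rewrite Rabs_mult, (Rabs_right (/ _)) by (left; apply Rinv_0_lt_compat; auto).
apply Rle_lt_trans with (1 * / INR (S b)); [|lra].
apply Rmult_le_compat_r. left; apply Rinv_0_lt_compat; auto.
unfold Rabs. destruct (Rcase_abs _); lra.
Qed.

Section Dense.
Variable n : nat.

Lemma dense_seq : exists d : nat -> pt n, forall x rho, 0 < rho -> exists j, forall i, Rabs (d j i - x i) < rho.
Proof.
destruct Cnt.surj_code as [g Hg].
exists (fun j i => nth (proj1_sig (Fin.to_nat i))
   (map (fun c : bool * nat * nat * nat => let '(s, a, b, _) := c in Q2R (qcode (s, a, b))) (g j)) 0).
intros x rho Hr.
set (y := fun k => match lt_dec k n with left h => x (Fin.of_nat_lt h) | right _ => 0 end).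
assert (Hc : forall k, exists c, Rabs (Q2R (qcode c) - y k) < rho) by (intros; apply rat_approx; auto).
set (cf := fun k => epsilon (inhabits (true, 0%nat, 0%nat)) (fun c => Rabs (Q2R (qcode c) - y k) < rho)).
assert (Hcf : forall k, Rabs (Q2R (qcode (cf k)) - y k) < rho).
{ intros k. apply (epsilon_spec (inhabits (true, 0%nat, 0%nat)) (fun c => Rabs (Q2R (qcode c) - y k) < rho)). apply Hc. }
destruct (Hg (map (fun k => let '(s, a, b) := cf k in (s, a, b, 0%nat)) (seq 0 n))) as [j Hj].
exists j. intros i. rewrite Hj, map_map.
destruct (Fin.to_nat i) as [k Hk] eqn:Ek. simpl proj1_sig.
match goal with |- context [map ?h (seq 0 n)] => set (hh := h) end.
assert (Hnth : nth k (map hh (seq 0 n)) 0 = hh k).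
{ rewrite nth_indep with (d' := hh 0%nat); [rewrite map_nth, seq_nth; auto | rewrite length_map, length_seq; auto]. }
rewrite Hnth. unfold hh. simpl.
destruct (cf k) as [[s a] b] eqn:Ec. 
specialize (Hcf k). rewrite Ec in Hcf.
replace (x i) with (y k); auto.
unfold y. destruct (lt_dec k n) as [h|h]; [|contradiction].
rewrite <- (Fin.of_nat_to_nat_inv i). rewrite Ek. simpl. f_equal. f_equal. apply proof_irrelevance.
Qed.
End Dense.

Section W.
Variable n : nat.
Variable d : nat -> pt n.
Hypothesis Hd : forall x rho, 0 < rho -> exists j, forall i, Rabs (d j i - x i) < rho.

Definition rr (m j : nat) : R := (1/2)^m * (1/2)^(S j).
Definition Wset : set_ n := fun x => forall m, exists j, cube (d j) (rr m j) x.

Lemma rr_pos : forall m j, 0 < rr m j.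
Proof. intros. unfold rr. apply Rmult_lt_0_compat; apply half_pow_pos. Qed.

Lemma rr_le1 : forall m j, rr m j <= 1.
Proof.
intros m j. unfold rr. pose proof (half_pow_le 0 m (Nat.le_0_l m)). pose proof (half_pow_le 0 (S j) (Nat.le_0_l _)).
pose proof (half_pow_pos m). pose proof (half_pow_pos (S j)). simpl in *. nra.
Qed.

Hypothesis Hn : (1 <= n)%nat.

Lemma W_null : null_set n Wset.
Proof.
intros eps He. destruct (half_pow_small eps He) as [m Hm].
exists d, (rr m). split; [|split].
- intros j. left; apply rr_pos.
- intros x Hx. apply Hx.
- intros N. apply Rle_lt_trans with (sum_f_R0 (rr m) N).
  + apply sum_Rle. intros j _. apply pow_le_self; auto. split. left; apply rr_pos. apply rr_le1.
  + unfold rr. rewrite (sum_eq _ (fun j => (1/2)^(S j) * (1/2)^m)) by (intros; ring).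
    rewrite <- scal_sum, geom_half. pose proof (half_pow_pos (S N)). pose proof (half_pow_pos m).
    apply Rle_lt_trans with ((1/2)^m * 1); [apply Rmult_le_compat_l; lra | lra].
Qed.

Lemma Wc_meager : meager n (fun x => ~ Wset x).
Proof.
exists (fun m x => forall j, ~ cube (d j) (rr m j) x). split.
- intros m x rho Hr. destruct (Hd x (rho / 2)) as [j Hj]. lra.
  exists (d j), (Rmin (rho / 2) (rr m j / 2)). split; [|split].
  + apply Rmin_glb_lt. lra. pose proof (rr_pos m j). lra.
  + intros z Hz i. specialize (Hz i). specialize (Hj i). pose proof (Rmin_l (rho/2) (rr m j / 2)).
    replace (z i - x i) with ((z i - d j i) + (d j i - x i)) by ring.
    eapply Rle_lt_trans. apply Rabs_triang. lra.
  + intros z Hz C. apply (C j). intros i. specialize (Hz i). pose proof (Rmin_r (rho/2) (rr m j / 2)). lra.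
- intros x Hx. apply NNPP. intros C. apply Hx. intros m. apply NNPP. intros C'. apply C. exists m.
  intros j Cj. apply C'. exists j. exact Cj.
Qed.
End W.

Theorem theorem2p5 (n : nat) (Hn : (1 <= n)%nat) (I J : set_ n -> Prop)
  (HIJ : (I = null_set n /\ J = meager n) \/ (I = meager n /\ J = null_set n))
  (Hcov : covt_ge_cof I) :
  exists H : set_ n, Q_subspace H /\ J H /\ ~ I H.
Proof.
destruct (dense_seq n) as [d Hd].
destruct HIJ as [[-> ->]|[-> ->]].
- refine (abstract_main n (null_set n) (null_sub n) (null_cunion n Hn) (null_full n Hn) (null_single n Hn)
    (null_scale n) (meager n) (meager_sub n) _ _ (fun x => ~ Wset n d x) _ _ Hcov).
  + intros A B HA HB. apply (meager_sub n _ (fun x => exists k, (match k with O => A | _ => B end) x)).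
    intros x [Hx|Hx]; [exists O|exists 1%nat]; auto.
    apply meager_cunion. intros [|k]; auto.
  + apply meager_single; auto.
  + apply (Wc_meager n d Hd).
  + apply (null_sub n _ (Wset n d)). intros x Hx. apply NNPP, Hx. apply W_null; auto.
- refine (abstract_main n (meager n) (meager_sub n) (meager_cunion n) (meager_full n) (meager_single n Hn)
    (meager_scale n) (null_set n) (null_sub n) _ _ (Wset n d) _ _ Hcov).
  + intros A B HA HB. apply (null_sub n _ (fun x => exists k, (match k with O => A | _ => B end) x)).
    intros x [Hx|Hx]; [exists O|exists 1%nat]; auto.
    apply (null_cunion n Hn). intros [|k]; auto.
  + apply null_single; auto.
  + apply (W_null n d Hn).
  + apply (Wc_meager n d Hd).
Qed.
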